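(* Let $X=\{a_1,\dots,a_\ell\}$ be a finite set of $\ell$ distinct points and $N\ge2$. A probability measure $\gamma$ on $X^N$ is a symmetrized Monge state, i.e. $\gamma=S\big(\sum_{\nu=1}^\ell\frac1\ell\delta_{T_1(a_\nu)}\otimes\cdots\otimes\delta_{T_N(a_\nu)}\big)$ for some bijections $T_1,\dots,T_N:X\to X$, if and only if it is an SAE state with uniform marginal $\bar\lambda$ whose site weights all equal $1/\ell$, i.e. $\gamma=\sum_{\nu=1}^\ell\frac1\ell S(\delta_{T_1(a_\nu)}\otimes\cdots\otimes\delta_{T_N(a_\nu)})$ for some (not necessarily bijective) maps $T_1,\dots,T_N:X\to X$ satisfying $\sum_{\nu=1}^\ell\frac1\ell\lambda^{(\nu)}=\bar\lambda$, where $\lambda^{(\nu)}=\frac1N\sum_{k=1}^N\delta_{T_k(a_\nu)}$.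
   Context: $\bar\lambda=\sum_{i=1}^\ell\frac1\ell\delta_{a_i}$ is the uniform probability measure on $X$. The symmetrization operator is $(S\gamma)(A_1\times\cdots\times A_N)=\frac1{N!}\sum_{\sigma\in S_N}\gamma(A_{\sigma(1)}\times\cdots\times A_{\sigma(N)})$. An SAE state with marginal $\lambda_*$ is a probability measure of the form $\sum_{\nu=1}^\ell\alpha^{(\nu)}S(\delta_{T_1(a_\nu)}\otimes\cdots\otimes\delta_{T_N(a_\nu)})$ with maps $T_k:X\to X$ and site weights $\alpha^{(\nu)}\ge0$ such that $\sum_\nu\alpha^{(\nu)}\lambda^{(\nu)}=\lambda_*$, with $\lambda^{(\nu)}$ as in the claim. *)

(* Defs.v *)
(* Discrete measures on the finite set X^N are represented by
   their point masses: functions {ffun 'I_N -> X} -> R. *)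
From HB Require Import structures.
From mathcomp Require Import all_boot all_order all_algebra all_fingroup.
From mathcomp Require Import reals.
Set Implicit Arguments. Unset Strict Implicit. Unset Printing Implicit Defensive.
Import Order.TTheory GRing.Theory Num.Theory.
Local Open Scope ring_scope.

Section Defs.
Variables (R : realType) (X : finType) (N : nat).

Definition pmeasure := {ffun 'I_N -> X} -> R.

Definition is_probability (g : pmeasure) : Prop :=
  (forall y, 0 <= g y) /\ \sum_y g y = 1.

Definition dirac_tensor (x : {ffun 'I_N -> X}) : pmeasure :=
  fun y => (y == x)%:R.

(* symmetrization S: (S g)(A_1 x...x A_N) = 1/N! sum_sigma g(A_sigma(1) x ... x A_sigma(N)),
   evaluated on singletons {y}. *)
Definition symmetrize (g : pmeasure) : pmeasure :=
  fun y => (N`!%:R)^-1 * \sum_(s : 'S_N) g [ffun i => y (s i)].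

Definition lambda_bar : X -> R := fun _ => (#|X|%:R)^-1.

Definition site_marginal (T : 'I_N -> X -> X) (nu : X) : X -> R :=
  fun x => (N%:R)^-1 * \sum_(k < N) (T k nu == x)%:R.

Definition sym_Monge_state (g : pmeasure) : Prop :=
  exists T : 'I_N -> X -> X, (forall k, bijective (T k)) /\
    forall y, g y = symmetrize
      (fun z => \sum_(nu : X) (#|X|%:R)^-1 * dirac_tensor [ffun k => T k nu] z) y.

Definition SAE_state_weights (lam : X -> R) (alpha : X -> R) (g : pmeasure) : Prop :=
  exists T : 'I_N -> X -> X,
    (forall x, \sum_(nu : X) alpha nu * site_marginal T nu x = lam x) /\
    forall y, g y = \sum_(nu : X) alpha nu * symmetrize (dirac_tensor [ffun k => T k nu]) y.

End Defs.

(* Main.v *)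
Require Import Defs.
From mathcomp Require Import all_boot all_order all_algebra all_fingroup.
From mathcomp Require Import reals.
From mathcomp Require Import zify.
Set Implicit Arguments. Unset Strict Implicit. Unset Printing Implicit Defensive.

Lemma hall (I V : finType) (v0 : V) n : forall (D : {set I}) (A : I -> {set V}),
  #|D| <= n ->
  (forall S : {set I}, S \subset D -> #|S| <= #|\bigcup_(i in S) A i|) ->
  exists f : I -> V, (forall i, i \in D -> f i \in A i) /\ {in D &, injective f}.
Proof.
elim: n => [|n IH] D A hD hH.
  exists (fun _ => v0); move: hD; rewrite leqn0 cards_eq0 => /eqP ->.
  by split => [i|i j]; rewrite inE.
have [/existsP [S /and4P [sSD nS0 nSD cS]]|nex] :=
  boolP [exists S : {set I}, [&& S \subset D, S != set0, S != D &
        #|\bigcup_(i in S) A i| <= #|S| ]].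
- have pSD : S \proper D by rewrite properEneq nSD.
  have [f1 [f1A f1i]] : exists f : I -> V,
      (forall i, i \in S -> f i \in A i) /\ {in S &, injective f}.
    apply: IH; first by have := proper_card pSD; lia.
    by move=> T sTS; apply: hH; apply: subset_trans sTS sSD.
  set NS := \bigcup_(i in S) A i.
  have [f2 [f2A f2i]] : exists f : I -> V,
      (forall i, i \in D :\: S -> f i \in A i :\: NS) /\ {in D :\: S &, injective f}.
    apply: IH.
      have : #|D :\: S| < #|D|.
        rewrite cardsD (setIidPr sSD).
        have : 0 < #|S| by rewrite card_gt0.
        have := subset_leq_card sSD; lia.
      lia.
    move=> T sTDS.
    have sTD : T \subset D by apply: subset_trans sTDS (subsetDl _ _).
    have dTS : T :&: S = set0.
      apply/setP => i; rewrite !inE; apply/andP => [[iT iS]].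
      by have := subsetP sTDS i iT; rewrite !inE iS.
    have hTS := hH (T :|: S); rewrite subUset sTD sSD in hTS; have {}hTS := hTS isT.
    rewrite bigcup_setU in hTS.
    have -> : \bigcup_(i in T) (A i :\: NS) = (\bigcup_(i in T) A i) :\: NS.
      apply/setP => v; rewrite inE; apply/bigcupP/andP.
        by case=> i iT; rewrite inE => /andP [vN vA]; split=> //; apply/bigcupP; exists i.
      by case=> vN /bigcupP [i iT vA]; exists i => //; rewrite inE vN.
    have e1 := cardsUI T S; rewrite dTS cards0 in e1.
    have e2 := cardsUI ((\bigcup_(i in T) A i) :\: NS) NS.
    have u1 : ((\bigcup_(i in T) A i) :\: NS) :|: NS =
              (\bigcup_(i in T) A i) :|: NS.
      by apply/setP => v; rewrite !inE; case: (v \in NS); rewrite ?orbT ?orbF.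
    have u2 : ((\bigcup_(i in T) A i) :\: NS) :&: NS = set0.
      by apply/setP => v; rewrite !inE; case: (v \in NS); rewrite ?andbF.
    rewrite u1 u2 cards0 in e2.
    rewrite -/NS in hTS cS; lia.
  exists (fun i => if i \in S then f1 i else f2 i); split.
    move=> i iD; case: ifP => iS; first exact: f1A.
    have : i \in D :\: S by rewrite inE iS iD.
    by move/f2A; rewrite inE => /andP [].
  move=> i j iD jD /=.
  have hNS k : k \in S -> f1 k \in NS by move=> kS; apply/bigcupP; exists k => //; exact: f1A.
  have hDS k : k \in D -> k \notin S -> k \in D :\: S by move=> ? ?; rewrite inE; apply/andP.
  case: ifP => iS; case: ifP => jS.
  + exact: f1i.
  + move=> e; have := f2A j (hDS j jD (negbT jS)); rewrite inE -e hNS //.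
  + move=> e; have := f2A i (hDS i iD (negbT iS)); rewrite inE e hNS //.
  + apply: f2i; exact: hDS (negbT _).
- case: (set_0Vmem D) => [D0|[i0 i0D]].
    by exists (fun _ => v0); rewrite D0; split => [i|i j]; rewrite inE.
  have nA : A i0 != set0.
    rewrite -card_gt0.
    have := hH [set i0]; rewrite sub1set i0D cards1 big_set1; by apply.
  case/set0Pn: nA => v vA.
  have hlt (T : {set I}) : T \subset D -> T != set0 -> T != D ->
      #|T| < #|\bigcup_(i in T) A i|.
    move=> sTD nT0 nTD; rewrite ltnNge; apply/negP => cT.
    by move/existsPn: nex => /(_ T); rewrite sTD nT0 nTD cT.
  have [f2 [f2A f2i]] : exists f : I -> V,
      (forall i, i \in D :\ i0 -> f i \in A i :\ v) /\ {in D :\ i0 &, injective f}.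
    apply: IH.
      by have := cardsD1 i0 D; rewrite i0D; lia.
    move=> T sTD.
    have sTD' : T \subset D by apply: subset_trans sTD (subsetDl _ _).
    case: (eqVneq T set0) => [->|nT0]; first by rewrite cards0.
    have nTD : T != D.
      apply/eqP => eTD; have := subsetP sTD i0; rewrite eTD i0D !inE eqxx.
      by move=> /(_ isT).
    have h1 := hlt T sTD' nT0 nTD.
    have -> : \bigcup_(i in T) (A i :\ v) = (\bigcup_(i in T) A i) :\ v.
      apply/setP => w; rewrite in_setD1; apply/bigcupP/andP.
        by case=> k kT; rewrite in_setD1 => /andP [wN wA]; split=> //; apply/bigcupP; exists k.
      by case=> wN /bigcupP [k kT wA]; exists k => //; rewrite in_setD1 wN.
    have := cardsD1 v (\bigcup_(i in T) A i).
    case: (v \in _); lia.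
  exists (fun i => if i == i0 then v else f2 i); split.
    move=> i iD; case: eqP => [->//|/eqP ni0].
    have : i \in D :\ i0 by rewrite !inE ni0 iD.
    by move/f2A; rewrite inE => /andP [].
  move=> i j iD jD /=.
  have hDS k : k \in D -> k != i0 -> k \in D :\ i0 by move=> ? ?; rewrite !inE; apply/andP.
  case: eqP => [->|/eqP ni]; case: eqP => [->//|/eqP nj].
  + move=> e; have := f2A j (hDS j jD nj); rewrite !inE -e eqxx.
    by [].
  + move=> e; have := f2A i (hDS i iD ni); rewrite !inE e eqxx.
    by [].
  + by apply: f2i; apply: hDS.
Qed.

Lemma size_sum_count (X : finType) (B : {set X}) (s : seq X) :
  {subset s <= B} -> size s = \sum_(x in B) count_mem x s.
Proof.
elim: s => [|y s IH] hs /=; first by rewrite big1.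
rewrite big_split /= -IH; last by move=> z zs; apply: hs; rewrite inE zs orbT.
rewrite (bigD1 y) /=; last by apply: hs; rewrite inE eqxx.
rewrite eqxx big1 ?addn0 ?add1n // => x /andP [_ /negbTE]; rewrite eq_sym => ->.
by [].
Qed.

Lemma sum_inj_eq (X : finType) (f : X -> X) (x : X) : injective f ->
  \sum_nu (f nu == x : nat) = 1.
Proof.
move=> /injF_bij [h fK hK].
rewrite (bigD1 (h x)) //= hK eqxx big1 ?addn0 // => nu /negbTE nh.
case: eqP => // e; by rewrite -e fK eqxx in nh.
Qed.

Lemma decomp (X : finType) (x0 : X) n : forall r : X -> seq X,
  (forall nu, size (r nu) = n) -> (forall x, \sum_nu count_mem x (r nu) = n) ->
  exists T : nat -> X -> X, (forall k, injective (T k)) /\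
    forall nu, perm_eq (r nu) [seq T k nu | k <- iota 0 n].
Proof.
elim: n => [|n IH] r hs hc.
  exists (fun _ => id); split; first by move=> k x y. by move=> nu; rewrite (size0nil (hs nu)).
pose A nu := [set x | x \in r nu].
have [f [fA fi]] : exists f : X -> X,
    (forall i, i \in [set: X] -> f i \in A i) /\ {in [set: X] &, injective f}.
  apply: (@hall X X x0 #|X|); first exact: max_card.
  move=> S _.
  set NS := \bigcup_(i in S) A i.
  rewrite -(@leq_pmul2r n.+1) //.
  have e1 : \sum_(nu in S) size (r nu) = #|S| * n.+1.
    by rewrite -sum_nat_const; apply: eq_bigr => nu _; rewrite hs.
  rewrite -e1.
  have e2 : \sum_(x in NS) \sum_nu count_mem x (r nu) = #|NS| * n.+1.
    by rewrite -sum_nat_const; apply: eq_bigr => x _; rewrite hc.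
  rewrite -e2.
  rewrite (eq_bigr (fun nu => \sum_(x in NS) count_mem x (r nu))); last first.
    move=> nu nuS; apply: size_sum_count => x xr; apply/bigcupP; exists nu => //.
    by rewrite inE.
  rewrite exchange_big /=; apply: leq_sum => x _.
  rewrite [X in _ <= X](bigID (fun nu => nu \in S)) /=; exact: leq_addr.
have finj : injective f by move=> a b; apply: fi; rewrite inE.
have fr nu : f nu \in r nu by have := fA nu; rewrite !inE => /(_ isT).
have hs' : forall nu, size (rem (f nu) (r nu)) = n.
  by move=> nu; rewrite size_rem ?hs.
have hc' : forall x, \sum_nu count_mem x (rem (f nu) (r nu)) = n.
  move=> x; apply/eqP; rewrite -(eqn_add2l 1) -{1}(sum_inj_eq x finj) -big_split /=.
  rewrite add1n -(hc x); apply/eqP; apply: eq_bigr => nu _.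
  by move/seq.permP: (perm_to_rem (fr nu)) => ->.
have [T' [T'i T'p]] := IH _ hs' hc'.
exists (fun k => if k is k'.+1 then T' k' else f); split.
  by case.
move=> nu; apply: (perm_trans (perm_to_rem (fr nu))).
rewrite /= perm_cons (iotaDl 1 0) -map_comp.
exact: T'p.
Qed.
Import GRing.Theory Num.Theory.
Local Open Scope ring_scope.

Lemma sym_perm (R : realType) (X : finType) (N : nat) (x x' : {ffun 'I_N -> X}) y :
  perm_eq [seq x k | k <- enum 'I_N] [seq x' k | k <- enum 'I_N] ->
  symmetrize (dirac_tensor R x) y = symmetrize (dirac_tensor R x') y.
Proof.
move=> hp.
have hp' : perm_eq [seq x k | k <- enum 'I_N] [tuple x' k | k < N].
  exact: hp.
case/tuple_permP: hp' => p E.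
have ex : x = [ffun i => x' (p i)].
  apply/ffunP => i; rewrite ffunE.
  have := congr1 (fun s => nth (x i) s i) E => /=.
  rewrite (nth_map i) ?size_enum_ord // nth_ord_enum => ->.
  by rewrite (nth_map i) ?size_enum_ord ?nth_ord_enum ?tnth_mktuple // size_tuple.
rewrite /symmetrize; congr (_ * _).
rewrite (reindex_inj (mulgI p)) /=.
apply: eq_bigr => s _; rewrite /dirac_tensor ex; congr (_%:R); congr (nat_of_bool _).
apply/idP/idP => /eqP /ffunP h; apply/eqP/ffunP => i.
- move: (h ((p^-1)%g i)); by rewrite !ffunE permM permKV => ->.
- rewrite !ffunE permM; move: (h (p i)); by rewrite ffunE.
Qed.

Lemma sym_lin (R : realType) (X : finType) (N : nat) (c : R)
  (F : X -> {ffun 'I_N -> X}) y :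
  symmetrize (fun z => \sum_(nu : X) c * dirac_tensor R (F nu) z) y =
  \sum_(nu : X) c * symmetrize (dirac_tensor R (F nu)) y.
Proof.
rewrite /symmetrize exchange_big mulr_sumr; apply: eq_bigr => nu _.
by rewrite !mulr_sumr; apply: eq_bigr => s _; rewrite mulrCA.
Qed.

Lemma sum_inj_eqR (R : realType) (X : finType) (f : X -> X) (x : X) :
  injective f -> \sum_nu ((f nu == x)%:R : R) = 1.
Proof. by move=> fi; rewrite -natr_sum sum_inj_eq. Qed.

Lemma count_enum (X : finType) N (F : 'I_N -> X) x :
  count_mem x [seq F k | k <- enum 'I_N] = (\sum_(k < N) (F k == x))%N.
Proof.
rewrite count_map -sum1_count big_mkcond /= big_enum_cond /=.
by apply: eq_bigr => k _; case: (F k == x).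
Qed.

Theorem theorem6p1 (R : realType) (X : finType) (N : nat) (hN : (2 <= N)%N)
  (g : pmeasure R X N) (hg : is_probability g) :
  sym_Monge_state g <->
  SAE_state_weights (@lambda_bar R X) (fun _ : X => (#|X|%:R)^-1 : R) g.
Proof.
have N0 : (N%:R : R) != 0 by rewrite pnatr_eq0 -lt0n; apply: leq_trans hN.
split.
- case=> T [Tb hT]; exists T; split.
    move=> x; rewrite /site_marginal /lambda_bar.
    under eq_bigr do rewrite mulrA.
    rewrite -mulr_sumr exchange_big /=.
    rewrite (eq_bigr (fun _ => 1)); last first.
      by move=> k _; apply: sum_inj_eqR; apply: bij_inj.
    by rewrite sumr_const card_ord -mulrA mulVf ?mulr1.
  by move=> y; rewrite hT sym_lin.
- case=> T [hm hT].
  case: (pickP X) => [x0 _|X0].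
  + set c : R := (#|X|%:R)^-1.
    have cne0 : c != 0 by rewrite invr_eq0 pnatr_eq0 -lt0n; apply/card_gt0P; by exists x0.
    pose r nu := [seq T k nu | k <- enum 'I_N].
    have hs nu : size (r nu) = N by rewrite size_map size_enum_ord.
    have hc x : (\sum_nu count_mem x (r nu))%N = N.
      have : c * ((N%:R)^-1 * \sum_nu \sum_(k < N) ((T k nu == x)%:R : R)) = c * 1.
        rewrite mulr1 -[RHS](hm x) mulr_sumr mulr_sumr.
        by apply: eq_bigr.
      move=> /(mulfI cne0) E.
      apply/eqP; rewrite -(eqr_nat R) natr_sum.
      under eq_bigr do rewrite count_enum natr_sum.
      apply/eqP; rewrite -[LHS](mulVKf N0) E mulr1 //.
    have [Tn [Tni Tnp]] := decomp x0 hs hc.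
    exists (fun k : 'I_N => Tn (val k)); split.
      by move=> k; apply: injF_bij.
    move=> y; rewrite hT sym_lin; apply: eq_bigr => nu _; congr (_ * _).
    apply: sym_perm.
    rewrite (eq_map (fun k => ffunE _ k)) /=.
    rewrite [X in perm_eq _ X](@eq_map _ _ _ (fun k : 'I_N => Tn (val k) nu)); last by move=> k /=; rewrite ffunE.
    rewrite (map_comp (fun k => Tn k nu) val) val_enum_ord.
    exact: Tnp.
  + exfalso.
    have := hg.2; rewrite big_pred0 ?oner_eq0 //.
    * by move/eqP; rewrite eq_sym oner_eq0.
    * move=> y; have : (0 < N)%N by apply: leq_trans hN.
      by move=> h; have := X0 (y (Ordinal h)).
Qed.
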